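(* Let $G$ be a connected graph of order $n$ with diameter $d\ge 2$, and suppose $G$ is not isomorphic to the path $P_{d+1}$. Then $m_G[n-d+2,n]\le n-d$.
   Context: For a graph $G$ of order $n$, the Laplacian eigenvalues are the eigenvalues of the Laplacian matrix $L(G)=D(G)-A(G)$ (they lie in $[0,n]$), and for an interval $I\subseteq[0,n]$, $m_G I$ denotes the number of Laplacian eigenvalues of $G$ (counted with multiplicity) in $I$. $P_k$ is the path on $k$ vertices. *)

(* Defs.v *)
From HB Require Import structures.
From mathcomp Require Import all_boot all_order all_algebra.
From mathcomp Require Import reals.
Set Implicit Arguments. Unset Strict Implicit. Unset Printing Implicit Defensive.
Import Order.TTheory GRing.Theory Num.Theory.
Local Open Scope ring_scope.

(* A simple graph: vertex set T (a finType), adjacency e : rel T,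
   assumed symmetric and irreflexive (hypotheses of the theorem). *)

Definition deg (T : finType) (e : rel T) (x : T) : nat := #|[set y | e x y]|.

Definition laplacian (R : nzRingType) (T : finType) (e : rel T) : 'M[R]_#|T| :=
  \matrix_(i, j)
    ((if i == j then (deg e (enum_val i))%:R else 0)
     - (e (enum_val i) (enum_val j))%:R).

(* s is the list of Laplacian eigenvalues of G counted with multiplicity:
   the characteristic polynomial of L(G) factors as prod_(x <- s) (X - x). *)
Definition laplacian_spectrum (R : realType) (T : finType) (e : rel T)
  (s : seq R) : Prop :=
  char_poly (laplacian R e) = \prod_(x <- s) ('X - x%:P).

Definition mG_closed (R : realType) (s : seq R) (a b : R) : nat :=
  count (fun x => (a <= x) && (x <= b)) s.

Definition within (T : finType) (e : rel T) (x y : T) (k : nat) : Prop :=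
  exists p : seq T, [/\ (size p <= k)%N, path e x p & last x p = y].

Definition diameter (T : finType) (e : rel T) (d : nat) : Prop :=
  (forall x y, within e x y d) /\ exists x y, ~ within e x y d.-1.

Definition connected_graph (T : finType) (e : rel T) : Prop :=
  forall x y, connect e x y.

Definition path_adj (k : nat) : rel 'I_k :=
  fun i j => (i.+1 == j :> nat) || (j.+1 == i :> nat).

Definition iso_to_path (T : finType) (e : rel T) (k : nat) : Prop :=
  exists f : T -> 'I_k, bijective f /\ forall x y, e x y = path_adj (f x) (f y).

(* Main.v *)
Require Import Defs.
From HB Require Import structures.
From mathcomp Require Import all_boot all_order all_algebra.
From mathcomp Require Import reals.
From mathcomp Require Import spectral sesquilinear.
From mathcomp.real_closed Require Import complex.
From mathcomp Require Import ring zify.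
Import Order.TTheory GRing.Theory Num.Theory.

(* Proof strategy: Cauchy-interlacing-type counting via the complex spectral
   theorem (count_spectrum), a quadratic-form bound on a coordinate subspace of
   dimension d (quad_graph), and the combinatorics of a diametral path. *)

Module GraphPart.
Set Implicit Arguments. Unset Strict Implicit.
Lemma ltn_neq m n : (m < n)%N -> m != n.
Proof. by move=> h; rewrite neq_ltn h. Qed.

Section Walks.
Variables (T : finType) (e : rel T).

Lemma within_mono x y k k' : within e x y k -> (k <= k')%N -> within e x y k'.
Proof. by case=> p [sp pp lp] kk; exists p; split => //; apply: leq_trans kk. Qed.

Lemma within_cat x y z a b : within e x y a -> within e y z b -> within e x z (a + b).
Proof.
case=> p [sp pp lp] [q [sq pq lq]]; exists (p ++ q); split.
- by rewrite size_cat leq_add.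
- by rewrite cat_path pp lp pq.
- by rewrite last_cat lp.
Qed.

Lemma within0 x y : within e x y 0 -> x = y.
Proof. by case=> [[|? ?] [] //]. Qed.

Lemma within1 x y : e x y -> within e x y 1.
Proof. by move=> exy; exists [:: y]; split => //=; rewrite exy. Qed.

Lemma within_refl x k : within e x x k.
Proof. by exists [::]; split. Qed.

End Walks.

Section Geodesic.
Variables (T : finType) (e : rel T) (x0 y0 : T) (p : seq T) (d : nat).
Hypotheses (pp : path e x0 p) (lp : last x0 p = y0) (sp : size p = d)
  (far : ~ within e x0 y0 d.-1).

Definition vtx k := nth x0 (x0 :: p) k.

Lemma vtx_edge k : (k < d)%N -> e (vtx k) (vtx k.+1).
Proof. by move=> kd; move/(pathP x0): pp => /(_ k); rewrite sp => /(_ kd). Qed.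

Lemma within_prefix k : (k <= d)%N -> within e x0 (vtx k) k.
Proof.
move=> kd; exists (take k p); split.
- by rewrite size_take_min geq_minl.
- by apply: take_path.
- rewrite (last_nth x0) size_takel ?sp //.
  by rewrite /vtx -[x0 :: take k p]/(take k.+1 (x0 :: p)) nth_take.
Qed.

Lemma within_suffix k : (k <= d)%N -> within e (vtx k) y0 (d - k).
Proof.
move=> kd; exists (drop k p); split.
- by rewrite size_drop sp.
- move: pp; rewrite -[p](cat_take_drop k) cat_path => /andP[_].
  rewrite drop_size_cat ?size_takel ?sp //.
  by rewrite (last_nth x0) size_takel ?sp // /vtx -[x0 :: take k p]/(take k.+1 (x0 :: p)) nth_take.
- rewrite -lp; rewrite -[in RHS](cat_take_drop k p) last_cat.
  by rewrite [last x0 _](last_nth x0) size_takel ?sp // /vtx -[x0 :: take k p]/(take k.+1 (x0 :: p)) nth_take.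
Qed.

Lemma geo a b k : (a <= b)%N -> (b <= d)%N -> within e (vtx a) (vtx b) k -> (b <= a + k)%N.
Proof.
move=> ab bd w; rewrite leqNgt; apply/negP => lt; apply: far.
have := within_cat (within_cat (within_prefix (leq_trans ab bd)) w) (within_suffix bd).
move/within_mono; apply; lia.
Qed.

Hypotheses (esym : symmetric e) (eirr : irreflexive e).
Local Notation v := vtx.

Lemma geo2 a b k : (a <= d)%N -> (b <= d)%N -> within e (v a) (v b) k ->
  (b <= a + k)%N /\ (a <= b + k)%N.
Proof.
move=> ad bd w; case: (leqP a b) => ab.
  split; first exact: geo ab bd w.
  by apply: leq_trans ab (leq_addr _ _).
split; first by apply: leq_trans (ltnW ab) (leq_addr _ _).
apply: geo (ltnW ab) ad _.
case: w => q [sq pq lq].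
exists (rev (belast (v a) q)); split.
- by rewrite size_rev size_belast.
- by rewrite -lq rev_path; move: pq; apply: sub_path => x y; rewrite /= esym.
- by case: q sq pq lq => [|z q] /= _ _; [move=> ->|rewrite rev_cons last_rcons].
Qed.

Lemma vtx_inj a b : (a <= d)%N -> (b <= d)%N -> v a = v b -> a = b.
Proof.
move=> ad bd eab; have := geo2 ad bd (k := 0).
by rewrite eab => /(_ (within_refl _ _ _)) [] ; rewrite !addn0 => h1 h2; apply/eqP; rewrite eqn_leq h1 h2.
Qed.

Lemma nochord a b : (a <= d)%N -> (b <= d)%N -> e (v a) (v b) ->
  (b <= a + 1)%N /\ (a <= b + 1)%N.
Proof. by move=> ad bd eab; apply: geo2 => //; apply: within1. Qed.

Lemma common w a b : (a <= d)%N -> (b <= d)%N -> e w (v a) -> e w (v b) ->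
  (b <= a + 2)%N.
Proof.
move=> ad bd ea eb; have [] := geo2 ad bd (k := 2); last by [].
exists [:: w; v b]; split => //=; by rewrite -esym ea eb.
Qed.


Definition Pset := [set v (val k) | k : 'I_d.+1].

Lemma inP t : reflect (exists2 k, (k <= d)%N & t = v k) (t \in Pset).
Proof.
apply: (iffP imsetP) => [[k _ ->]|[k kd ->]]; first by exists k; [rewrite -ltnS ltn_ord|].
by exists (Ordinal (kd : (k < d.+1)%N)).
Qed.

Lemma vP k : (k <= d)%N -> v k \in Pset.
Proof. by move=> kd; apply/inP; exists k. Qed.

Lemma card_P : #|Pset| = d.+1.
Proof.
rewrite card_imset ?card_ord //.
move=> a b eab; apply/val_inj; apply: vtx_inj eab; by rewrite -ltnS ltn_ord.
Qed.

Lemma nbr_P k u : (k <= d)%N -> u \in Pset -> e (v k) u ->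
  ((0 < k)%N /\ u = v k.-1) \/ ((k < d)%N /\ u = v k.+1).
Proof.
move=> kd /inP [b bd ->] ekb.
have [h1 h2] := nochord kd bd ekb.
have bk : b != k by apply/eqP => bk; move: ekb; rewrite bk eirr.
case: (ltngtP b k) => [bk'|kb|bk0]; last by rewrite bk0 eqxx in bk.
  left; split; first exact: leq_ltn_trans (leq0n b) bk'.
  have -> : k = b.+1 by rewrite addn1 in h2; apply/eqP; rewrite eqn_leq bk' h2.
  by [].
right; have eb : b = k.+1 by rewrite addn1 in h1; apply/eqP; rewrite eqn_leq kb h1.
by split; [rewrite -eb | rewrite eb].
Qed.

Lemma all_in_P_iso : (forall t, t \in Pset) -> iso_to_path e d.+1.
Proof.
move=> allP.
have memp : forall t, t \in x0 :: p.
  move=> t; have /inP [k kd ->] := allP t.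
  by rewrite /vtx mem_nth //= sp.
have idx : forall t, (index t (x0 :: p) < d.+1)%N.
  by move=> t; have := index_mem t (x0 :: p); rewrite memp /= sp => ->.
have vidx : forall t, v (index t (x0 :: p)) = t by move=> t; rewrite /vtx nth_index.
pose f t : 'I_d.+1 := Ordinal (idx t).
have finj : injective f.
  move=> t u /(congr1 val) h; rewrite -(vidx t) -(vidx u); congr v; exact: h.
exists f; split.
  apply: (@inj_card_bij T _ f finj); rewrite card_ord -card_P; apply: max_card.
move=> t u; rewrite /path_adj.
rewrite -{1}(vidx t) -{1}(vidx u).
have -> : (f t : nat) = index t (x0 :: p) by [].
have -> : (f u : nat) = index u (x0 :: p) by [].
have tl := idx t; have ul := idx u.
set a := index t _ in tl *; set b := index u _ in ul *.
rewrite !ltnS in tl ul; clearbody a b.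
apply/idP/idP.
  move=> eab; have [h1 h2] := nochord tl ul eab.
  have ab : a != b by apply/eqP => ab; move: eab; rewrite ab eirr.
  case: (ltngtP a b) => [ab'|ba|ab0]; last by rewrite ab0 eqxx in ab.
    by rewrite addn1 in h1; rewrite eqn_leq ab' h1.
  by rewrite addn1 in h2; rewrite orbC eqn_leq ba h2.
case/orP => /eqP h.
  by rewrite -h; apply: vtx_edge; rewrite -h in ul.
by rewrite esym -h; apply: vtx_edge; rewrite -h in tl.
Qed.


Definition amin w := find (fun k => e w (v k)) (iota 0 d.+1).
Definition jj w := minn (amin w).+1 d.

Lemma amin_le w k : (k <= d)%N -> e w (v k) ->
  (amin w <= k)%N /\ e w (v (amin w)).
Proof.
move=> kd ewk.
have hs : has (fun k => e w (v k)) (iota 0 d.+1).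
  by apply/hasP; exists k => //; rewrite mem_iota.
split.
  rewrite leqNgt; apply/negP => lt.
  by have := before_find 0 lt; rewrite nth_iota ?add0n ?ewk // ltnS.
have := nth_find 0 hs; rewrite nth_iota ?add0n //.
by rewrite -[X in (_ < X)%N](size_iota 0 d.+1) -has_find.
Qed.

Lemma jle w : (jj w <= d)%N.
Proof. exact: geq_minr. Qed.

Lemma jprop w k : (0 < k)%N -> (k < d)%N -> e (v k) w -> k != jj w ->
  (k.+1 == jj w) || ((jj w).+1 == k).
Proof.
move=> k0 kd ekw kj; rewrite esym in ekw.
have [ak ewa] := amin_le (ltnW kd) ekw.
have ad : (amin w <= d)%N by apply: leq_trans ak (ltnW kd).
have := common ad (ltnW kd) ewa ekw.
move: kj; rewrite /jj; set a := amin w.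
have -> : minn a.+1 d = a.+1 by apply/minn_idPl; apply: leq_ltn_trans ak kd.
move: ak; clear; lia.
Qed.

Lemma jedge w k : (0 < k)%N -> (k < d)%N -> e (v k) w -> k != jj w ->
  e (v k) (v (jj w)).
Proof.
move=> k0 kd ekw kj; case/orP: (jprop k0 kd ekw kj) => /eqP h.
  by rewrite -h; apply: vtx_edge.
by rewrite -h esym; apply: vtx_edge; rewrite h; apply: ltnW.
Qed.

Definition Sset w := Pset :\ v (jj w).

Lemma card_S w : #|Sset w| = d.
Proof. by have := cardsD1 (v (jj w)) Pset; rewrite vP ?jle // card_P add1n => -[]. Qed.


Lemma bound w k : w \notin Pset -> (k <= d)%N -> k != jj w ->
  (deg e (v k) + #|[set u in Sset w | e (v k) u]| + ~~ ((0 < k)%N && (k < d)%N) <= #|T| - d + 2)%N.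
Proof.
move=> wP kd kj.
set N := [set u | e (v k) u].
have degE : deg e (v k) = #|N :&: Pset| + #|N :\: Pset| by rewrite cardsID.
have dlE : [set u in Sset w | e (v k) u] = N :&: Sset w.
  by apply/setP => u; rewrite !inE andbC.
rewrite degE dlE.
have cP : #|~: Pset| = #|T| - d.+1 by rewrite -(cardsC Pset) card_P addKn.
have m1 : (0 < #|~: Pset|)%N by apply/card_gt0P; exists w; rewrite inE.
have c1 : (#|N :\: Pset| + ~~ e (v k) w <= #|~: Pset|)%N.
  case: (boolP (e (v k) w)) => ekw /=.
    by rewrite addn0; apply: subset_leq_card; apply/subsetP => u; rewrite !inE => /andP[].
  rewrite (cardsD1 w (~: Pset)) inE wP add1n addn1 ltnS.
  apply: subset_leq_card; apply/subsetP => u; rewrite !inE => /andP[uP uN].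
  rewrite uP andbT; apply/eqP => uw; move: ekw; rewrite -uw.
  by rewrite uN.
have c2 : (#|N :&: Pset| <= (0 < k)%N + (k < d)%N)%N.
  pose A : {set T} := if (0 < k)%N then [set v k.-1] else set0.
  pose B : {set T} := if (k < d)%N then [set v k.+1] else set0.
  have : (#|A :|: B| <= (0 < k)%N + (k < d)%N)%N.
    rewrite cardsU; apply: leq_trans (leq_subr _ _) _.
    by rewrite /A /B; case: (0 < k)%N; case: (k < d)%N; rewrite ?cards1 ?cards0.
  apply: leq_trans; apply: subset_leq_card; apply/subsetP => u0; rewrite !inE => /andP[uN uP].
  case: (nbr_P kd uP uN) => -[h ->]; rewrite /A /B h.
    by rewrite !inE eqxx.
  by rewrite !inE eqxx orbT.
have c3 : (#|N :&: Sset w| + (v (jj w) \in N) <= #|N :&: Pset|)%N.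
  rewrite addnC (cardsD1 (v (jj w)) (N :&: Pset)) [v (jj w) \in N :&: _]inE (vP (jle w)) andbT leq_add2l.
  apply: subset_leq_card; apply/subsetP => u; rewrite !inE.
  by case/andP => -> /andP[-> ->].
case: (boolP ((0 < k)%N && (k < d)%N)) => /= [/andP[k0 k1]|kend].
  case: (boolP (e (v k) w)) => ekw.
    have ej : v (jj w) \in N by rewrite inE; apply: jedge.
    move: c1 c2 c3 m1; rewrite ekw ej k0 k1 /= cP.
    set a := #|N :&: Pset|; set b := #|N :\: Pset|; set c := #|N :&: Sset w|; set t := #|T|; clearbody a b c t; move: kd; clear; lia.
  move: c1 c2 c3 m1; rewrite ekw k0 k1 /= cP.
  set a := #|N :&: Pset|; set b := #|N :\: Pset|; set c := #|N :&: Sset w|; set t := #|T|; clearbody a b c t; move: kd; clear; lia.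
have : ((0 < k)%N + (k < d)%N <= 1)%N.
  by move: kend; case: (0 < k)%N; case: (k < d)%N.
move: c1 c2 c3 m1; rewrite cP.
set a := #|N :&: Pset|; set b := #|N :\: Pset|; set c := #|N :&: Sset w|; set t := #|T|; clearbody a b c t; move: kd; clear; lia.
Qed.


Lemma inS w k : (k <= d)%N -> k != jj w -> v k \in Sset w.
Proof.
move=> kd kj; rewrite /Sset !inE vP // andbT.
by apply/eqP => /vtx_inj h; move: kj; rewrite h ?eqxx // jle.
Qed.

Lemma strict_prop (Z : zmodType) w (y : T -> Z) : w \notin Pset -> (1 < d)%N ->
  (forall t, t \in Sset w ->
     (deg e t + #|[set u in Sset w | e t u]| < #|T| - d + 2)%N -> y t = 0%R) ->
  (forall t u, t \in Sset w -> u \in Sset w -> e t u -> (y t + y u = 0)%R) ->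
  forall t, t \in Sset w -> y t = 0%R.
Proof.
move=> wP d1 H1 H2.
have endp : forall k, (k <= d)%N -> k != jj w -> ~~ ((0 < k)%N && (k < d)%N) -> y (v k) = 0%R.
  move=> k kd kj ke; apply: H1; first exact: inS.
  have := bound wP kd kj; rewrite ke addn1; exact.
have lower : forall i, (i < jj w)%N -> y (v i) = 0%R.
  elim=> [|i IH] ij.
    by apply: endp; [by [] | by rewrite neq_ltn ij | by []].
  have ij' : (i < jj w)%N by apply: ltnW.
  have jd := jle w.
  have := H2 _ _ (inS (leq_trans (ltnW ij') jd) (ltn_neq ij'))
                 (inS (leq_trans (ltnW ij) jd) (ltn_neq ij))
                 (vtx_edge (leq_trans ij' jd)).
  by rewrite IH // add0r.
have upper : forall i, (jj w < d - i)%N -> y (v (d - i)) = 0%R.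
  elim=> [|i IH] ij.
    rewrite subn0 in ij *; apply: endp; [by [] | by rewrite eq_sym ltn_neq | by rewrite ltnn andbF].
  have ij' : (jj w < d - i)%N by apply: leq_trans ij _; apply: leq_sub2l.
  have e1 : (d - i.+1).+1 = d - i.
    by move: ij; clear; lia.
  have k1d : (d - i.+1 < d)%N by rewrite e1; apply: leq_subr.
  have ed : e (v (d - i.+1)) (v (d - i)) by rewrite -e1; apply: vtx_edge.
  have n1 : d - i.+1 != jj w by rewrite eq_sym (ltn_neq ij).
  have n2 : d - i != jj w by rewrite eq_sym (ltn_neq ij').
  have := H2 _ _ (inS (ltnW k1d) n1) (inS (leq_subr i d) n2) ed.
  by rewrite IH // addr0.
move=> t; rewrite /Sset !inE => /andP[tj /inP [k kd tk]].
have kj : k != jj w by apply/eqP => kj; move: tj; rewrite tk kj eqxx.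
rewrite tk; case: (ltngtP k (jj w)) => [kl|kg|ke]; last by rewrite ke eqxx in kj.
  exact: lower.
by rewrite -(subKn kd); apply: upper; rewrite subKn.
Qed.


End Geodesic.

End GraphPart.
Import GraphPart.

Local Open Scope ring_scope.

Section LA.
Variable C : numClosedFieldType.
Local Open Scope sesquilinear_scope.

Lemma card_countE (T : finType) (a : pred T) : #|a| = count a (enum T).
Proof. rewrite cardE -size_filter. congr size. rewrite /enum_mem.
by rewrite filter_predT -?enumT; apply: eq_filter. Qed.

Lemma rowsub_unitary m m' n (f : 'I_m' -> 'I_m) (M : 'M[C]_(m, n)) :
  injective f -> M \is unitarymx -> rowsub f M \is unitarymx.
Proof.
move=> finj /row_unitarymxP HM; apply/row_unitarymxP => i j.
by rewrite !row_rowsub HM (inj_eq finj).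
Qed.

Lemma unitary1 n : (1%:M : 'M[C]_n) \is unitarymx.
Proof. by apply/unitarymxP; rewrite trmx1 map_mx1 mulmx1. Qed.

Lemma char_poly_conj n (P B : 'M[C]_n) : P \in unitmx ->
  char_poly (invmx P *m B *m P) = char_poly B.
Proof.
move=> Pu; rewrite /char_poly.
have -> : char_poly_mx (invmx P *m B *m P) =
   map_mx polyC (invmx P) *m char_poly_mx B *m map_mx polyC P.
  rewrite /char_poly_mx mulmxBr mulmxBl -!map_mxM.
  congr (_ - _); rewrite -mulmxA -scalar_mxC mulmxA -map_mxM mulVmx // map_mx1 mul1mx //.
rewrite !det_mulmx !det_map_mx mulrC mulrA -rmorphM -det_mulmx mulmxV //.
by rewrite det1 rmorph1 mul1r.
Qed.

Lemma quad_diag n (w : 'rV[C]_n) (D : 'rV[C]_n) :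
  (w *m diag_mx D *m w ^t*) 0 0 = \sum_i D 0 i * (w 0 i * (w 0 i)^*).
Proof.
rewrite mul_mx_diag mxE; apply: eq_bigr => i _.
by rewrite !mxE mulrCA mulrA.
Qed.

Lemma quad_id n (w : 'rV[C]_n) :
  (w *m w ^t*) 0 0 = \sum_i (w 0 i * (w 0 i)^*).
Proof. by rewrite mxE; apply: eq_bigr => i _; rewrite !mxE. Qed.

Lemma count_spectrum n (A : 'M[C]_n) (c : C) (sC : seq C) (S : {set 'I_n})
  (Asym : A ^t* = A)
  (hchar : char_poly A = \prod_(x <- sC) ('X - x%:P))
  (HS : forall v : 'rV[C]_n, v != 0 -> (forall i, i \notin S -> v 0 i = 0) ->
        (v *m A *m v ^t*) 0 0 < c * (v *m v ^t*) 0 0) :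
  (count (fun x : C => (c <= x)%R) sC + #|S| <= n)%N.
Proof.
have Anorm : A \is normalmx by apply/normalmxP; rewrite Asym.
set P := spectralmx A; set D := spectral_diag A.
have Pun : P \is unitarymx by apply: spectral_unitarymx.
have Pu : P \in unitmx by apply: spectral_unit.
have AE : A = invmx P *m diag_mx D *m P by apply/orthomx_spectralP.
have PPt : P^t* *m P = 1%:M by rewrite -invmx_unitary // mulVmx.
have PtP : P *m P^t* = 1%:M by apply/unitarymxP.
have cnt : count (fun x : C => (c <= x)%R) sC = #|[set i | c <= D 0 i]|.
  have : perm_eq sC [seq D 0 i | i <- enum 'I_n].
    apply: prod_XsubC_eq; rewrite -hchar AE char_poly_conj //.
    by rewrite char_poly_trig ?diag_mx_is_trig // big_map big_enum /=;
      apply: eq_bigr => i _; rewrite mxE eqxx.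
  move/permP=> ->; rewrite count_map card_countE.
  by apply: (@eq_count _ (fun i => c <= D 0 i)) => i; rewrite -[RHS]/(i \in [set i0 | c <= D 0 i0]) inE.
set I := [set i | c <= D 0 i].
pose K := rowsub (fun r : 'I_#|I| => enum_val r) P.
pose W := rowsub (fun r : 'I_#|S| => enum_val r) (1%:M : 'M[C]_n).
have rK : \rank K = #|I|.
  by apply: mxrank_unitary; apply: rowsub_unitary => //; apply: enum_val_inj.
have rW : \rank W = #|S|.
  by apply: mxrank_unitary; apply: rowsub_unitary (unitary1 n); apply: enum_val_inj.
rewrite cnt -rK -rW -mxrank_sum_cap.
case: (ltnP 0 (\rank (K :&: W))%MS) => [pos|]; last first.
  by rewrite leqn0 => /eqP ->; rewrite addn0 rank_leq_col.
exfalso.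
have : (K :&: W)%MS != 0 by rewrite -mxrank_eq0 -lt0n.
case/matrix0Pn => r [j] nz.
set v := row r (K :&: W)%MS.
have vnz : v != 0.
  by apply/eqP => /matrixP /(_ 0 j); rewrite !mxE => vj; move: nz; rewrite vj eqxx.
have : (v <= K :&: W)%MS by apply: row_sub.
rewrite sub_capmx => /andP[vK vW].
have vS : forall i, i \notin S -> v 0 i = 0.
  move=> i iS; rewrite -(mulmxKpV vW) mxE; apply: big1 => k _.
  rewrite !mxE; case: eqP => [ei|]; last by rewrite mulr0.
  by move: iS; rewrite -ei enum_valP.
have := HS v vnz vS.
set w := v *m P^t*.
have vE : v = w *m P by rewrite /w -mulmxA PPt mulmx1.
have quadE : (v *m A *m v ^t*) 0 0 = (w *m diag_mx D *m w ^t*) 0 0.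
  rewrite AE invmx_unitary // vE !mulmxA -(mulmxA w P) PtP mulmx1.
  by rewrite trmx_mul map_mxM !mulmxA -(mulmxA _ P) PtP mulmx1.
have normE : (v *m v ^t*) 0 0 = (w *m w ^t*) 0 0.
  by rewrite vE trmx_mul map_mxM mulmxA -(mulmxA w) PtP mulmx1.
have wI : forall i, i \notin I -> w 0 i = 0.
  move=> i iI; rewrite /w.
  have [u ->] : exists u, v = u *m K by exists (v *m pinvmx K); rewrite mulmxKpV.
  rewrite /K rowsubE -!mulmxA PtP mulmx1.
  rewrite mxE; apply: big1 => k _; rewrite !mxE.
  case: eqP => [ei|]; last by rewrite mulr0.
  by move: iI; rewrite -ei enum_valP.
rewrite quadE normE quad_diag quad_id mulr_sumr.
move=> H; suff H2 : \sum_i c * (w 0 i * (w 0 i)^*) <= \sum_i D 0 i * (w 0 i * (w 0 i)^*).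
  by have := lt_le_trans H H2; rewrite ltxx.
apply: ler_sum => i _.
case: (boolP (i \in I)) => iI.
  by apply: ler_wpM2r; [apply: mul_conjC_ge0 | move: iI; rewrite inE].
by rewrite wI // mul0r !mulr0.
Qed.
End LA.

Section Quad.
Variable C : numClosedFieldType.

Lemma sum_nat_indicator (V : finType) (b : pred V) :
  \sum_u ((b u)%:R : C) = (#|[set u | b u]|)%:R.
Proof.
rewrite (bigID b) /= [X in _ + X]big1 ?addr0; last by move=> u /negPf ->.
rewrite (eq_bigr (fun _ => 1)); last by move=> u ->.
by rewrite sumr_const; congr (_ *+ _); apply: eq_card => u; rewrite inE.
Qed.

Lemma quad_graph (V : finType) (e : rel V) (esym : symmetric e) (dg : V -> nat)
  (S : {set V}) (c : nat) (y : V -> C)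
  (ysupp : forall t, t \notin S -> y t = 0)
  (Hb : forall t, t \in S -> (dg t + #|[set u in S | e t u]| <= c)%N)
  (Hstrict : (forall t, t \in S -> (dg t + #|[set u in S | e t u]| < c)%N -> y t = 0) ->
     (forall t u, t \in S -> u \in S -> e t u -> y t + y u = 0) -> forall t, y t = 0)
  (ynz : exists t, y t != 0) :
  \sum_t \sum_u y t * (y u)^* * ((t == u)%:R * (dg t)%:R - (e t u)%:R)
    < c%:R * \sum_t y t * (y t)^*.
Proof.
pose nrm (z : C) := z * z^*.
pose eS t u := [&& e t u, t \in S & u \in S].
have eSsym : forall t u, eS t u = eS u t.
  by move=> t u; rewrite /eS esym; case: (t \in S); case: (u \in S); rewrite ?andbT ?andbF.
pose dl t := #|[set u in S | e t u]|.
have fa : forall t, \sum_u (eS t u)%:R * nrm (y t) = (dl t)%:R * nrm (y t).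
  move=> t; rewrite -mulr_suml sum_nat_indicator; case: (boolP (t \in S)) => tS.
    by congr (_%:R * _); apply: eq_card => u; rewrite !inE /eS tS; case: (e t u); case: (u \in S).
  by rewrite /nrm ysupp // !mul0r !mulr0.
pose X := \sum_t \sum_u (eS t u)%:R * (y t * (y u)^*).
pose N := \sum_t nrm (y t).
have QE : \sum_t \sum_u y t * (y u)^* * ((t == u)%:R * (dg t)%:R - (e t u)%:R)
   = \sum_t (dg t)%:R * nrm (y t) - X.
  rewrite /X -sumrB; apply: eq_bigr => t _.
  rewrite (eq_bigr (fun u => y t * (y u)^* * ((t == u)%:R * (dg t)%:R)
                 - (eS t u)%:R * (y t * (y u)^*))); last first.
    move=> u _; rewrite mulrBr; congr (_ - _).
    rewrite /eS; case: (boolP (t \in S)) => tS; last by rewrite (ysupp t) // !mul0r mulr0.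
    case: (boolP (u \in S)) => uS; last first.
      by rewrite (ysupp u) // andbF rmorph0 !mulr0 !mul0r.
    by rewrite !andbT mulrC.
  rewrite sumrB (bigD1 t) //= big1 ?addr0; last first.
    by move=> u /negPf; rewrite eq_sym => ->; rewrite mul0r mulr0.
  by rewrite eqxx mul1r mulrC.
have ZE : \sum_t \sum_u (eS t u)%:R * nrm (y t + y u)
   = (\sum_t (dl t)%:R * nrm (y t)) *+ 2 + X *+ 2.
  have E1 : forall t u, (eS t u)%:R * nrm (y t + y u) =
     (eS t u)%:R * nrm (y t) + (eS u t)%:R * nrm (y u)
     + (eS t u)%:R * (y t * (y u)^*) + (eS u t)%:R * (y u * (y t)^*).
    move=> t u; rewrite -eSsym /nrm rmorphD /=; ring.
  rewrite (eq_bigr (fun t => \sum_u ((eS t u)%:R * nrm (y t) + (eS u t)%:R * nrm (y u)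
     + (eS t u)%:R * (y t * (y u)^*) + (eS u t)%:R * (y u * (y t)^*)))); last first.
    by move=> t _; apply: eq_bigr => u _; rewrite E1.
  rewrite (eq_bigr (fun t => \sum_u (eS t u)%:R * nrm (y t) + \sum_u (eS u t)%:R * nrm (y u)
     + \sum_u (eS t u)%:R * (y t * (y u)^*) + \sum_u (eS u t)%:R * (y u * (y t)^*))); last first.
    by move=> t _; rewrite !big_split.
  rewrite !big_split /=.
  rewrite [X in _ + X + _ + _]exchange_big [X in _ + _ + _ + X]exchange_big /=.
  rewrite -/X (eq_bigr _ (fun t _ => fa t)).
  by rewrite !mulr2n; ring.
pose F := \sum_t ((c - (dg t + dl t))%N)%:R * nrm (y t).
have FE : F = c%:R * N - \sum_t (dg t)%:R * nrm (y t) - \sum_t (dl t)%:R * nrm (y t).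
  rewrite /N mulr_sumr -!sumrB; apply: eq_bigr => t _.
  case: (boolP (t \in S)) => tS.
    by rewrite natrB ?Hb // natrD; ring.
  by rewrite /nrm ysupp // mul0r !mulr0 !subrr.
pose Q := \sum_t \sum_u y t * (y u)^* * ((t == u)%:R * (dg t)%:R - (e t u)%:R).
have key : (c%:R * N - Q) *+ 2 = F *+ 2 + \sum_t \sum_u (eS t u)%:R * nrm (y t + y u).
  rewrite /Q QE ZE FE; rewrite !mulr2n; ring.
have F0 : 0 <= F.
  by apply: sumr_ge0 => t _; apply: mulr_ge0; [apply: ler0n | apply: mul_conjC_ge0].
have Z0 : 0 <= \sum_t \sum_u (eS t u)%:R * nrm (y t + y u).
  apply: sumr_ge0 => t _; apply: sumr_ge0 => u _.
  by apply: mulr_ge0; [apply: ler0n | apply: mul_conjC_ge0].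
rewrite -subr_gt0 -/N -(pmulrn_lgt0 _ (isT : (0 < 2)%N)) key lt0r.
rewrite addr_ge0 ?mulrn_wge0 // andbT paddr_eq0 ?mulrn_wge0 //.
apply/negP => /andP[/eqP HF /eqP HZ].
move: HF; rewrite -mulr_natr => /eqP; rewrite mulf_eq0 pnatr_eq0 orbF => /eqP HF.
case: ynz => t0; apply/negP; rewrite negbK; apply/eqP; apply: Hstrict.
  move=> t tS lt.
  have := psumr_eq0P (fun i _ => mulr_ge0 (ler0n _ _) (mul_conjC_ge0 (y i))) HF (i:=t) isT.
  move/eqP; rewrite mulf_eq0 pnatr_eq0 mul_conjC_eq0 => /orP[|/eqP//].
  by rewrite subn_eq0 leqNgt lt.
move=> t u tS uS etu.
have Hi : forall i, true -> 0 <= \sum_u (eS i u)%:R * nrm (y i + y u).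
  by move=> i _; apply: sumr_ge0 => u' _; apply: mulr_ge0; [apply: ler0n | apply: mul_conjC_ge0].
have := psumr_eq0P Hi HZ (i:=t) isT => Ht.
have := psumr_eq0P (fun i _ => mulr_ge0 (ler0n _ _) (mul_conjC_ge0 (y t + y i))) Ht (i:=u) isT.
by rewrite /eS etu tS uS mul1r => /eqP; rewrite mul_conjC_eq0 => /eqP.
Qed.

End Quad.

Lemma card_transport (T : finType) (P : pred T) :
  #|[set j : 'I_#|T| | P (enum_val j)]| = #|[set u | P u]|.
Proof.
have -> : [set u | P u] = enum_val @: [set j : 'I_#|T| | P (enum_val j)].
  apply/setP => u; rewrite inE; apply/idP/imsetP => [Pu|[j]].
    by exists (enum_rank u); rewrite ?inE enum_rankK.
  by rewrite inE => Pj ->.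
by rewrite card_imset //; apply: enum_val_inj.
Qed.

Section Bridge.
Variable C : numClosedFieldType.
Local Open Scope sesquilinear_scope.

Lemma lap_quad (T : finType) (e : rel T) (v : 'rV[C]_#|T|) :
  (v *m laplacian C e *m v ^t*) 0 0 =
  \sum_i \sum_j v 0 i * (v 0 j)^* *
     ((i == j)%:R * (deg e (enum_val i))%:R - (e (enum_val i) (enum_val j))%:R).
Proof.
rewrite mxE (eq_bigr (fun j => \sum_i v 0 i * laplacian C e i j * (v 0 j)^*)); last first.
  by move=> j _; rewrite !mxE mulr_suml; apply: eq_bigr => i _; rewrite !mxE.
rewrite exchange_big /=; apply: eq_bigr => i _; apply: eq_bigr => j _.
rewrite !mxE [_ * (v 0 j)^*]mulrC mulrA [_ * v 0 i]mulrC; congr (_ * _).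
by case: (i == j); rewrite ?mul1r ?mul0r.
Qed.

Lemma lap_herm (T : finType) (e : rel T) (esym : symmetric e) :
  (laplacian C e) ^t* = laplacian C e.
Proof.
apply/matrixP => i j; rewrite !mxE rmorphB /= conjC_nat.
congr (_ - _); last by rewrite esym.
rewrite eq_sym; case: eqP => [->|_]; by rewrite ?conjC_nat ?rmorph0.
Qed.

Lemma quad_id' n (w : 'rV[C]_n) :
  (w *m w ^t*) 0 0 = \sum_i (w 0 i * (w 0 i)^*).
Proof. by rewrite mxE; apply: eq_bigr => i _; rewrite !mxE. Qed.

End Bridge.

Lemma lap_map (R : realType) (T : finType) (e : rel T) :
  laplacian R[i] e = map_mx (real_complex R) (laplacian R e).
Proof.
apply/matrixP => i j; rewrite !mxE rmorphB /= rmorph_nat.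
by case: (i == j); rewrite ?rmorph_nat ?rmorph0.
Qed.

Theorem theorem3p1 (R : realType) (T : finType) (e : rel T) (d : nat)
  (e_sym : symmetric e) (e_irr : irreflexive e)
  (Gconn : connected_graph e) (Gdiam : diameter e d) (d_ge2 : (2 <= d)%N)
  (not_path : ~ iso_to_path e d.+1)
  (s : seq R) (Hs : laplacian_spectrum e s) :
  (mG_closed s (#|T|%:R - d%:R + 2) #|T|%:R <= #|T| - d)%N.
Proof.
case: Gdiam => Hall [x0 [y0 far]].
have [p [sp0 pp lp]] := Hall x0 y0.
have sp : size p = d.
  apply/eqP; rewrite eqn_leq sp0 /= leqNgt; apply/negP => lt; apply: far.
  by exists p; split => //; rewrite -ltnS (ltn_predK d_ge2).
have [w wP] : exists w, w \notin Pset x0 p d.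
  apply/existsP; rewrite -negb_forall; apply/negP => /forallP allP.
  exact: not_path (all_in_P_iso pp lp sp far e_sym e_irr allP).
set S := Sset e x0 p d w.
set c := (#|T| - d + 2)%N.
have dn : (d < #|T|)%N.
  by have := max_card (mem (Pset x0 p d)); rewrite (card_P pp lp sp far e_sym).
have boundS : forall t, t \in S -> (deg e t + #|[set u in S | e t u]| <= c)%N.
  move=> t; rewrite /S /Sset !inE => /andP[tj /inP [k kd tk]].
  have kj : k != jj e x0 p d w by apply/eqP => kj; move: tj; rewrite tk kj eqxx.
  have := bound pp lp sp far e_sym e_irr wP kd kj; rewrite -tk.
  by apply: leq_trans; apply: leq_addr.
pose S' : {set 'I_#|T|} := [set i | enum_val i \in S].
have dlE : forall i : 'I_#|T|, #|[set j in S' | e (enum_val i) (enum_val j)]| =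
                     #|[set u in S | e (enum_val i) u]|.
  move=> i; rewrite -(@card_transport T (fun u => (u \in S) && e (enum_val i) u)).
  by congr #|pred_of_set _|; apply/setP => j; rewrite !inE.
have cS' : #|S'| = d.
  rewrite card_transport -(card_S pp lp sp far e_sym w).
  by apply: eq_card => u; rewrite inE.
pose toC := real_complex R.
have charC : char_poly (laplacian R[i] e) = \prod_(x <- map toC s) ('X - x%:P).
  by rewrite lap_map -map_char_poly Hs map_prod_XsubC big_map.
have HS : forall v : 'rV[R[i]]_#|T|, v != 0 -> (forall i, i \notin S' -> v 0 i = 0) ->
    (v *m laplacian R[i] e *m (v ^t*)%sesqui) 0 0 < c%:R * (v *m (v ^t*)%sesqui) 0 0.
  move=> v vnz vsupp; rewrite lap_quad quad_id'.
  have esym' : symmetric (fun i j : 'I_#|T| => e (enum_val i) (enum_val j)).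
    by move=> i j; apply: e_sym.
  apply: (@quad_graph _ _ (fun i j => e (enum_val i) (enum_val j)) esym'
            (fun i => deg e (enum_val i)) S' c (fun i => v 0 i)).
  - exact: vsupp.
  - move=> i; rewrite inE => iS; rewrite dlE; exact: boundS.
  - move=> H1 H2 i; case: (boolP (i \in S')) => iS; last by apply: vsupp.
    have := @strict_prop _ _ _ _ _ _ pp lp sp far e_sym e_irr _ w
       (fun t => v 0 (enum_rank t)) wP d_ge2.
    move=> Hsp; rewrite -(enum_valK i); apply: Hsp.
    + move=> t tS lt; apply: H1; first by rewrite inE enum_rankK.
      by rewrite dlE enum_rankK.
    + move=> t u tS uS etu; apply: H2; [by rewrite inE enum_rankK | by rewrite inE enum_rankK | by rewrite !enum_rankK].
    + by move: iS; rewrite inE.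
  - case: (pickP (fun i0 => v 0 i0 != 0)) => [i0 Hi|H]; first by exists i0.
    exfalso; move/negP: vnz; apply; apply/eqP/rowP => i0; rewrite mxE.
    by move: (H i0) => /negbFE/eqP.
have key := @count_spectrum _ _ _ _ _ _ (@lap_herm R[i] T e e_sym) charC HS.
rewrite cS' in key.
have cnt : (mG_closed s (#|T|%:R - d%:R + 2) #|T|%:R <=
           count (fun x : R[i] => (c%:R <= x)%R) (map toC s))%N.
  rewrite /mG_closed count_map; apply: sub_count => x /= /andP[h _].
  rewrite -(rmorph_nat toC) lecR /c natrD natrB ?(ltnW dn) //.
apply: leq_trans cnt _; rewrite leq_subRL ?(ltnW dn) // addnC; exact: key.
Qed.
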